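(* Let $\rho^A$ be a quantum state on a finite-dimensional system $A$ of dimension $d_A$, and let $\varepsilon\in[0,1]$. Then \[ \kappa_{3\sqrt{\varepsilon}}(\rho^A)\ \ge\ \log d_A-\widetilde{H}_{\max}^{\varepsilon}(A)_{\rho^A}. \]
   Context: All logarithms are base 2; whenever a quantity expresses a number of bits/qubits, a dimension, or a support size, the appropriate floor or ceiling is implicitly taken. Smoothed support max-entropy: given $\rho^A$ and $\varepsilon\ge 0$, let $\rho'^A\le\rho^A$ be the operator obtained from the spectral decomposition of $\rho^A$ by zeroing out the smallest eigenvalues whose sum is at most $\varepsilon$; then $\widetilde{H}_{\max}^{\varepsilon}(A)_{\rho}:=\log|\operatorname{supp}(\rho')|$ (log of the rank of $\rho'$). A purity concentration $\varepsilon$-code for $\rho^A$ consists of an ancilla system $C$ of dimension $d_C$ and a unitary $U^{AC\to A_pA_g}$ (with $A\otimes C\cong A_p\otimes A_g$) such that $\big\|\operatorname{Tr}_{A_g}[U(\rho^A\otimes|0\rangle\langle 0|^C)U^\dagger]-|0\rangle\langle0|^{A_p}\big\|_1\le\varepsilon$; its rate is $\log d_{A_p}-\log d_C$. A rate is $\varepsilon$-achievable if some purity concentration $\varepsilon$-code has that rate, and $\kappa_\varepsilon(\rho^A)$ (the $\varepsilon$-purity) is the supremum of $\varepsilon$-achievable rates. *)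

(* Defs.v *)
From HB Require Import structures.
From mathcomp Require Import all_boot all_order all_algebra.
From mathcomp Require Import sesquilinear spectral.
From mathcomp Require Import complex mxtens.
From mathcomp Require Import classical_sets reals exp.

Set Implicit Arguments.
Unset Strict Implicit.
Unset Printing Implicit Defensive.

Import Order.TTheory GRing.Theory Num.Theory.
Local Open Scope ring_scope.
Local Open Scope sesquilinear_scope.

Section Quantum.
Variable R : realType.
Local Notation C := (R[i]).

Definition log2 (x : R) : R := ln x / ln 2.

Definition is_state n (rho : 'M[C]_n) : Prop :=
  [/\ rho ^t* = rho,
      (forall v : 'rV[C]_n, 0 <= (v *m rho *m v ^t*) 0 0)
    & \tr rho = 1].

(* trace norm ||X||_1 = Tr sqrt(X^dagger X) = sum of the square roots of the
   eigenvalues of X^dagger X (computed via its spectral decomposition) *)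
Definition trnorm n (X : 'M[C]_n) : R :=
  \sum_(i < n) Num.sqrt (complex.Re (spectral_diag (X ^t* *m X) 0 i)).

(* partial trace over the second factor of  'I_p x 'I_g  (Kronecker indexing
   of mxtens) *)
Definition ptrace2 p g (M : 'M[C]_(p * g)) : 'M[C]_p :=
  \matrix_(i, j) \sum_(k < g) M (mxtens_index (i, k)) (mxtens_index (j, k)).

Definition eigs n (rho : 'M[C]_n) (i : 'I_n) : R := complex.Re (spectral_diag rho 0 i).

Definition eig_order n (rho : 'M[C]_n) : seq 'I_n :=
  sort (fun i j => eigs rho i <= eigs rho j) (enum 'I_n).

Definition n_zeroed n (rho : 'M[C]_n) (eps : R) : nat :=
  \max_(k < n.+1 | \sum_(i <- take k (eig_order rho)) eigs rho i <= eps) k.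

Definition smoothed_op n (rho : 'M[C]_n) (eps : R) : 'M[C]_n :=
  let Z := take (n_zeroed rho eps) (eig_order rho) in
  invmx (spectralmx rho)
    *m diag_mx (\row_i (if i \in Z then 0 else spectral_diag rho 0 i))
    *m spectralmx rho.

(* smoothed support max-entropy  log |supp rho'| = log rank rho' *)
Definition Hmax_tilde n (rho : 'M[C]_n) (eps : R) : R :=
  log2 (\rank (smoothed_op rho eps))%:R.

(* r is eps-achievable for rho: there is a purity concentration eps-code
   (ancilla C of dimension c.+1, unitary U : A (x) C -> A_p (x) A_g with
   dim A_p = p.+1, dim A_g = g) of rate log d_Ap - log d_C equal to r *)
Definition achievable dA (rho : 'M[C]_dA) (eps r : R) : Prop :=
  exists (c p g : nat) (U : 'M[C]_(p.+1 * g, dA * c.+1)),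
    [/\ (p.+1 * g = dA * c.+1)%N,
        U \is unitarymx,
        trnorm (ptrace2 (U *m (rho *t delta_mx (ord0 : 'I_c.+1) ord0) *m U ^t*)
                - delta_mx ord0 ord0) <= eps
      & r = log2 p.+1%:R - log2 c.+1%:R].

Definition purity dA (rho : 'M[C]_dA) (eps : R) : R :=
  sup [set r | achievable rho eps r].

End Quantum.

(* Main.v *)
Require Import Defs.
From HB Require Import structures.
From mathcomp Require Import all_boot all_order all_algebra.
From mathcomp Require Import sesquilinear spectral.
From mathcomp Require Import complex mxtens.
From mathcomp Require Import classical_sets reals exp.
From mathcomp Require Import fingroup perm.
From mathcomp Require Import lra.
Import Order.TTheory GRing.Theory Num.Theory.
Local Open Scope ring_scope.

Lemma perm_into (T : finType) (A B : {set T}) : (#|A| <= #|B|)%N ->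
  exists s : {perm T}, forall x, x \in A -> s x \in B.
Proof.
move=> leAB.
set sA := enum A ++ enum (~: A); set sB := enum B ++ enum (~: B).
have szA : size sA = #|T| by rewrite size_cat -!cardE cardsC.
have szB : size sB = #|T| by rewrite size_cat -!cardE cardsC.
have allA : forall x, x \in sA.
  by move=> x; rewrite mem_cat !mem_enum finset.in_setC; case: (x \in A).
have uA : uniq sA.
  rewrite cat_uniq !enum_uniq /= andbT; apply/hasPn => x.
  by rewrite !mem_enum finset.in_setC.
have uB : uniq sB.
  rewrite cat_uniq !enum_uniq /= andbT; apply/hasPn => x.
  by rewrite !mem_enum finset.in_setC.
pose f x := nth x sB (index x sA).
have f_inj : injective f.
  move=> x y; rewrite /f.
  have ix : (index x sA < size sB)%N by rewrite szB -szA index_mem.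
  have iy : (index y sA < size sB)%N by rewrite szB -szA index_mem.
  rewrite (set_nth_default x y iy) => /eqP; rewrite nth_uniq // => /eqP e.
  by rewrite -(nth_index x (allA x)) e nth_index.
exists (perm f_inj) => x xA; rewrite permE /f.
have -> : index x sA = index x (enum A) by rewrite index_cat mem_enum xA.
have lt : (index x (enum A) < #|B|)%N.
  by apply: leq_trans leAB; rewrite cardE index_mem mem_enum.
by rewrite nth_cat -cardE lt -mem_enum mem_nth // -cardE.
Qed.

Lemma sum_tens (V : nmodType) m n (F : 'I_(m * n) -> V) :
  \sum_x F x = \sum_i \sum_k F (mxtens_index (i, k)).
Proof.
rewrite pair_big /=.
rewrite (reindex (@mxtens_index m n)) /=; last first.
  by exists (@mxtens_unindex m n) => x _; rewrite ?mxtens_indexK ?mxtens_unindexK.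
by apply: eq_bigr => -[i k].
Qed.

Lemma char_poly_conj (F : fieldType) n (P A : 'M[F]_n) : P \in unitmx ->
  char_poly (invmx P *m A *m P) = char_poly A.
Proof.
move=> Pu; rewrite /char_poly.
have -> : char_poly_mx (invmx P *m A *m P) =
   map_mx polyC (invmx P) *m char_poly_mx A *m map_mx polyC P.
  rewrite /char_poly_mx !map_mxM mulmxBr mulmxBl.
  congr (_ - _); first by rewrite scalar_mxC -mulmxA -map_mxM mulVmx // map_mx1 mulmx1.
rewrite !det_mulmx mulrAC -det_mulmx -map_mxM mulVmx //.
by rewrite map_mx1 det1 mul1r.
Qed.

Section TR.
Variable R : realType.
Local Notation C := (R[i]).
Local Open Scope sesquilinear_scope.

Lemma trnorm_diag n (d : 'rV[C]_n) :
  trnorm (diag_mx d) = \sum_i Num.sqrt (complex.Re ((d 0 i)^* * d 0 i)).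
Proof.
rewrite /trnorm.
set y := \row_i ((d 0 i)^* * d 0 i).
have Y : (diag_mx d)^t* *m diag_mx d = diag_mx y.
  rewrite tr_diag_mx map_diag_mx mulmx_diag; congr diag_mx.
  by apply/rowP => i; rewrite !mxE.
have N : diag_mx y \is normalmx.
  by apply/normalmxP; rewrite tr_diag_mx map_diag_mx; exact: diag_mxC.
rewrite Y.
have /orthomx_spectralP E := N.
set P := spectralmx (diag_mx y) in E.
set s := spectral_diag (diag_mx y) in E *.
have cp : char_poly (diag_mx y) = char_poly (diag_mx s).
  by rewrite {1}E char_poly_conj // spectral_unit.
rewrite !char_poly_trig ?diag_mx_is_trig // in cp.
have pe : perm_eq [seq y 0 i | i <- enum 'I_n] [seq s 0 i | i <- enum 'I_n].
  have Hd : forall (v : 'rV[C]_n) i, diag_mx v i i = v 0 i.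
    by move=> v i; rewrite mxE eqxx mulr1n.
  apply: prod_XsubC_eq; rewrite !big_map -enumT !big_enum /=.
  transitivity (\prod_(i<n) ('X - (diag_mx y i i)%:P)).
    by apply: eq_bigr => i _; rewrite Hd.
  by rewrite cp; apply: eq_bigr => i _; rewrite Hd.
transitivity (\sum_(z <- [seq s 0 i | i <- enum 'I_n]) Num.sqrt (complex.Re z)).
  by rewrite big_map big_enum.
rewrite -(perm_big _ pe) big_map big_enum /=.
by apply: eq_bigr => i _; rewrite mxE.
Qed.
End TR.

Section Main.
Variable R : realType.
Local Notation C := (R[i]).
Local Open Scope sesquilinear_scope.

Lemma ln2_gt0 : 0 < ln (2 : R).
Proof. by apply: ln_gt0; rewrite ltr1n. Qed.

Lemma log2_ge0 (k : nat) : 0 <= log2 (k%:R : R).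
Proof.
rewrite /log2 divr_ge0 ?(ltW ln2_gt0) //.
case: k => [|k]; first by rewrite ln0.
by apply: ln_ge0; rewrite ler1n.
Qed.

Lemma log2_le (a b : nat) : (0 < a)%N -> (a <= b)%N -> log2 (a%:R : R) <= log2 b%:R.
Proof.
move=> a0 ab; rewrite /log2 ler_wpM2r // ?invr_ge0 ?(ltW ln2_gt0) //.
rewrite ler_ln ?ler_nat // posrE ltr0n //; exact: leq_trans ab.
Qed.

Lemma log2M (a b : nat) : (0 < a)%N -> (0 < b)%N ->
  log2 ((a * b)%:R : R) = log2 a%:R + log2 b%:R.
Proof.
move=> a0 b0; rewrite /log2 natrM lnM ?posrE ?ltr0n // mulrDl //.
Qed.

Lemma achievable_bound n (rho : 'M[C]_n.+1) e r :
  achievable rho e r -> r <= log2 n.+1%:R.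
Proof.
case=> c [p [g [U [dim _ _ ->]]]].
have g0 : (0 < g)%N by move: dim; case: (g) => //; rewrite muln0.
have le : (p.+1 <= n.+1 * c.+1)%N by rewrite -dim leq_pmulr.
rewrite lerBlDr -log2M //; exact: log2_le.
Qed.

Lemma tens_idx_eq m k (i j : 'I_m) (a b : 'I_k) :
  (mxtens_index (i, a) == mxtens_index (j, b)) = (i == j) && (a == b).
Proof.
apply/eqP/andP => [/(congr1 (@mxtens_unindex m k)) | [/eqP-> /eqP->] //].
by rewrite !mxtens_indexK => -[-> ->].
Qed.

Lemma tens11 a b : (1%:M : 'M[C]_a) *t (1%:M : 'M[C]_b) = 1%:M.
Proof.
apply/matrixP => x y.
case: x / (@mxtens_indexP a b x) => i k; case: y / (@mxtens_indexP a b y) => j l.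
rewrite tensmxE !mxE tens_idx_eq.
by case: (i == j); case: (k == l); rewrite /= ?(mul1r, mul0r).
Qed.

Lemma adjM a b k (A : 'M[C]_(a,b)) (B : 'M_(b,k)) : (A *m B)^t* = B^t* *m A^t*.
Proof. by rewrite trmx_mul map_mxM. Qed.

Lemma adjT a b k l (A : 'M[C]_(a,b)) (B : 'M[C]_(k,l)) : (A *t B)^t* = A^t* *t B^t*.
Proof. by rewrite trmx_tens map_mxT. Qed.

Lemma adj_perm k (s : 'S_k) : (perm_mx s : 'M[C]_k)^t* = perm_mx s^-1.
Proof. by rewrite tr_perm_mx map_perm_mx. Qed.

Lemma perm_unitary k (s : 'S_k) : (perm_mx s : 'M[C]_k) \is unitarymx.
Proof. by apply/unitarymxP; rewrite adj_perm -perm_mxM mulgV perm_mx1. Qed.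

Lemma code_core n c (P : 'M[C]_n.+1) (lam : 'I_n.+1 -> R) (rho : 'M[C]_n.+1)
  (K : {set 'I_n.+1}) :
  P \is unitarymx -> P *m rho *m P^t* = diag_mx (\row_i (lam i)%:C)%C ->
  (forall i, 0 <= lam i) -> \sum_i lam i = 1 -> (#|K| <= c.+1)%N ->
  exists U : 'M[C]_(n.+1 * c.+1, n.+1 * c.+1), U \is unitarymx /\
    trnorm (ptrace2 (U *m (rho *t delta_mx (ord0 : 'I_c.+1) ord0) *m U ^t*)
                - delta_mx ord0 ord0) <= 2 * \sum_(i | i \notin K) lam i.
Proof.
move=> Pu DS lam0 sum1 Kc.
have PPt : P *m P^t* = 1%:M by apply/unitarymxP.
pose A : {set 'I_(n.+1 * c.+1)} := [set mxtens_index (i, ord0 : 'I_c.+1) | i in K].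
pose B : {set 'I_(n.+1 * c.+1)} := [set mxtens_index (ord0 : 'I_n.+1, k) | k : 'I_c.+1].
have injA : injective (fun i : 'I_n.+1 => mxtens_index (i, ord0 : 'I_c.+1)).
  by move=> i j /(congr1 (@mxtens_unindex _ _)); rewrite !mxtens_indexK => -[].
have injB : injective (fun k : 'I_c.+1 => mxtens_index (ord0 : 'I_n.+1, k)).
  by move=> i j /(congr1 (@mxtens_unindex _ _)); rewrite !mxtens_indexK => -[].
have cA : #|A| = #|K| by rewrite card_imset.
have cB : #|B| = c.+1 by rewrite card_imset // card_ord.
have [sg hsg] : exists sg : 'S_(n.+1 * c.+1), forall x, x \in A -> sg x \in B.
  by apply: perm_into; rewrite cA cB.
pose pi := (sg^-1)%g.
pose T := P *t (1%:M : 'M[C]_c.+1).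
have TTt : T *m T^t* = 1%:M.
  by rewrite /T adjT tensmx_mul PPt trmx1 map_mx1 mulmx1 tens11.
exists (perm_mx pi *m T); split.
  apply/unitarymxP; rewrite adjM mulmxA -(mulmxA _ T) TTt mulmx1.
  by apply/unitarymxP; exact: perm_unitary.
set E := delta_mx (ord0 : 'I_c.+1) ord0.
pose D := diag_mx (\row_i (lam i)%:C)%C *t E.
have TD : T *m (rho *t E) *m T^t* = D.
  by rewrite /T adjT tensmx_mul tensmx_mul DS trmx1 map_mx1 mul1mx mulmx1.
rewrite adjM adj_perm.
have -> : perm_mx pi *m T *m (rho *t E) *m (T^t* *m perm_mx pi^-1) =
  perm_mx pi *m D *m perm_mx pi^-1 by rewrite -TD !mulmxA.
pose tau (x : 'I_(n.+1 * c.+1)) :=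
  if (mxtens_unindex x).2 == ord0 then lam (mxtens_unindex x).1 else 0.
have Dxy : forall x y, D x y = (x == y)%:R * (tau x)%:C%C.
  move=> x y.
  case: x / (@mxtens_indexP n.+1 c.+1 x) => i k.
  case: y / (@mxtens_indexP n.+1 c.+1 y) => j l.
  rewrite tensmxE !mxE tens_idx_eq /tau mxtens_indexK /=.
  case: (i == j); rewrite /= ?mulr0n ?mulr1n ?mul0r //.
  case: (k =P ord0) => [->|k0]; case: (l =P ord0) => [->|l0] /=;
    rewrite ?mulr1 ?mulr0 ?mul1r ?mul0r //.
  by rewrite eq_sym (introF eqP l0) mul0r.
clearbody D.
pose om i := \sum_(k < c.+1) tau (pi (mxtens_index (i, k))).
have PT : ptrace2 (perm_mx pi *m D *m perm_mx pi^-1) = diag_mx (\row_i (om i)%:C)%C.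
  rewrite -row_permE -col_permE; apply/matrixP => i j; rewrite !mxE.
  under eq_bigr do rewrite !mxE Dxy (inj_eq (@perm_inj _ pi)) tens_idx_eq eqxx andbT.
  case: (i == j); rewrite ?mulr1n ?mulr0n.
    by rewrite raddf_sum; apply: eq_bigr => k _; rewrite mul1r.
  by rewrite big1 // => k _; rewrite mul0r.
have PD : diag_mx (\row_i (om i)%:C)%C - delta_mx ord0 ord0 =
    diag_mx (\row_i ((om i - (i == ord0)%:R)%:C)%C).
  apply/matrixP => i j; rewrite !mxE; case: (i =P j) => [<-|/eqP ij].
    by rewrite andbb !mulr1n raddfB /= rmorph_nat.
  rewrite !mulr0n (_ : (i == ord0) && (j == ord0) = false) ?subr0 //.
  by apply/negP => /andP[/eqP ei /eqP ej]; move: ij; rewrite ei ej eqxx.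
have hz : forall w : R, Num.sqrt (complex.Re (((w%:C)%C)^* * (w%:C)%C)) = `|w|.
  by move=> w /=; rewrite oppr0 mulr0 subr0 -expr2 sqrtr_sqr.
rewrite PT PD trnorm_diag.
under eq_bigr do rewrite mxE hz.
have tau0 : forall x, 0 <= tau x by move=> x; rewrite /tau; case: ifP.
have tau_idx : forall i k, tau (mxtens_index (i, k)) = if k == ord0 then lam i else 0.
  by move=> i k; rewrite /tau mxtens_indexK.
have om0 : forall i, 0 <= om i by move=> i; apply: sumr_ge0 => k _.
have som : \sum_i om i = 1.
  rewrite /om -(@sum_tens _ n.+1 c.+1 (fun x => tau (pi x))).
  have -> : \sum_x tau (pi x) = \sum_x tau x.
    by rewrite [RHS](reindex_inj (@perm_inj _ pi)).
  rewrite sum_tens -sum1.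
  apply: eq_bigr => i _; rewrite (bigD1 ord0) //= big1 ?addr0 ?tau_idx ?eqxx //.
  by move=> k /negbTE k0; rewrite tau_idx k0.
have omK : \sum_(i in K) lam i <= om ord0.
  have e1 : \sum_(i in K) lam i = \sum_(a in A) tau a.
    rewrite big_imset /=; last by move=> ? ? _ _; apply: injA.
    by apply: eq_bigr => i _; rewrite tau_idx eqxx.
  have e2 : \sum_(a in A) tau a = \sum_(x in [set sg a | a in A]) tau (pi x).
    rewrite [RHS]big_imset /=; last by move=> x y _ _; apply: perm_inj.
    by apply: eq_bigr => a _; rewrite /pi permK.
  have e3 : \sum_(x in [set sg a | a in A]) tau (pi x) <= \sum_(x in B) tau (pi x).
    rewrite big_mkcond [X in _ <= X]big_mkcond; apply: ler_sum => x _.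
    case: ifP => hx.
      have -> : x \in B by case/imsetP: hx => a aA ->; exact: hsg.
      by [].
    by case: ifP.
  have e4 : \sum_(x in B) tau (pi x) = om ord0.
    by rewrite big_imset /=; last by move=> ? ? _ _; apply: injB.
  by rewrite e1 e2 -e4.
have hK : \sum_(i in K) lam i + \sum_(i | i \notin K) lam i = 1.
  by rewrite -sum1 [in RHS](bigID (mem K)).
rewrite (bigD1 ord0) //=.
have -> : \sum_(i < n.+1 | i != ord0) `|om i - (i == ord0)%:R| = 1 - om ord0.
  rewrite -som [in RHS](bigD1 ord0) //= [om ord0 + _]addrC addrK.
  by apply: eq_bigr => i /negbTE ->; rewrite subr0 ger0_norm.
have hS : 0 <= 1 - om ord0.
  rewrite -som (bigD1 ord0) //= [om ord0 + _]addrC addrK.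
  by apply: sumr_ge0 => i _.
rewrite ler0_norm; last by lra.
lra.
Qed.

Lemma delta_entry n i (M : 'M[C]_n) :
  ((delta_mx 0 i : 'rV[C]_n) *m M *m (delta_mx 0 i : 'rV[C]_n)^t*) 0 0 = M i i.
Proof.
rewrite -rowE mxE (bigD1 i) //= big1 ?addr0.
  by rewrite !mxE !eqxx /= conjC1 mulr1.
by move=> j /negbTE ji; rewrite !mxE ji /= conjC0 mulr0.
Qed.

Lemma code_exists n (rho : 'M[C]_n.+1) eps : is_state rho -> 0 <= eps <= 1 ->
  exists c, (c.+1 <= maxn (\rank (smoothed_op rho eps)) 1)%N /\
    achievable rho (3 * Num.sqrt eps) (log2 n.+1%:R - log2 c.+1%:R).
Proof.
move=> [Hh Hp Htr] /andP[e0 e1].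
set P := spectralmx rho; set s := spectral_diag rho.
have Pu : P \is unitarymx := spectral_unitarymx rho.
have PPt : P *m P^t* = 1%:M by apply/unitarymxP.
have PtP : P^t* *m P = 1%:M by rewrite -invmx_unitary // mulVmx // unitarymx_unit.
have Erho : rho = P^t* *m diag_mx s *m P.
  by rewrite -invmx_unitary //; apply/orthomx_spectralP; apply/normalmxP; rewrite Hh.
have DS : P *m rho *m P^t* = diag_mx s.
  by rewrite Erho !mulmxA PPt mul1mx -mulmxA PPt mulmx1.
have adjM : forall a b k (A : 'M[C]_(a,b)) (B : 'M_(b,k)), (A *m B)^t* = B^t* *m A^t*.
  by move=> a b k A B; rewrite trmx_mul map_mxM.
have s_ge0 : forall i, 0 <= s 0 i.
  move=> i; have := Hp (row i P).
  rewrite rowE adjM.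
  set e := (delta_mx 0 i : 'rV[C]_n.+1).
  have -> : e *m P *m rho *m (P^t* *m e^t*) = e *m (P *m rho *m P^t*) *m e^t*.
    by rewrite !mulmxA.
  by rewrite DS delta_entry mxE eqxx mulr1n.
pose lam i := complex.Re (s 0 i).
have sR : forall i, s 0 i = (lam i)%:C%C /\ 0 <= lam i.
  move=> i; rewrite /lam; move: (s_ge0 i); case: (s 0 i) => a b.
  by rewrite lecE /= => /andP[/eqP -> a0].
have sum1 : \sum_i lam i = 1.
  have : \tr rho = \sum_i s 0 i.
    by rewrite Erho mxtrace_mulC mulmxA PPt mul1mx mxtrace_diag.
  by rewrite Htr => /(congr1 (@complex.Re R)); rewrite raddf_sum /=.
set Z := take (n_zeroed rho eps) (eig_order rho).
have HZ : \sum_(i <- Z) lam i <= eps.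
  rewrite /Z /n_zeroed.
  have [k kP ->] := @eq_bigmax_cond _
    (fun k : 'I_n.+2 => \sum_(i <- take k (eig_order rho)) eigs rho i <= eps)
    (fun k => val k) (ltac:(apply/card_gt0P; exists ord0; by rewrite unfold_in /= take0 big_nil)).
  exact: kP.
have uZ : uniq Z by rewrite take_uniq // sort_uniq enum_uniq.
rewrite big_uniq // in HZ.
set d' := \row_i (if i \in Z then 0 else s 0 i).
set K := [set i | d' 0 i != 0].
pose del := \sum_(i | i \notin K) lam i.
have hdel : del <= eps.
  apply: le_trans HZ; rewrite /del big_mkcond [X in _ <= X]big_mkcond /=.
  apply: ler_sum => i _; case: ifP => iK; case: ifP => iZ //.
  - move: iK; rewrite inE /d' mxE iZ negbK => /eqP si.
    by rewrite /lam si.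
  - exact: (sR i).2.
have hK : (\sum_(i in K) lam i = 1 - del).
  by rewrite -sum1 [in RHS](bigID (mem K)) /= addrK.
have hr : (#|K| <= \rank (smoothed_op rho eps))%N.
  have -> : smoothed_op rho eps = P^t* *m diag_mx d' *m P.
    by rewrite /smoothed_op /= -/P invmx_unitary.
  pose f := (@enum_val _ (mem K)).
  pose E : 'M[C]_(#|K|, n.+1) := \matrix_(k, j) ((j == f k)%:R).
  pose F : 'M[C]_(n.+1, #|K|) := \matrix_(j, k) ((j == f k)%:R * (d' 0 j)^-1).
  apply: (@mulmx1_min_rank _ _ _ _ _ (E *m P) (P^t* *m F)).
  rewrite !mulmxA -(mulmxA E) PPt mulmx1 -(mulmxA _ P) PPt mulmx1.
  apply/matrixP => k l; rewrite mul_mx_diag !mxE (bigD1 (f k)) //= big1 ?addr0.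
    rewrite !mxE !eqxx mul1r (inj_eq enum_val_inj) mulrA mulrAC mulfV ?mul1r //.
    by move: (enum_valP k); rewrite inE mxE.
  by move=> j /negbTE jk; rewrite !mxE jk mul0r mul0r.
have DS' : P *m rho *m P^t* = diag_mx (\row_i (lam i)%:C)%C.
  by rewrite DS; congr diag_mx; apply/rowP => i; rewrite mxE (sR i).1.
have lam0 : forall i, 0 <= lam i by move=> i; exact: (sR i).2.
have [U [Uu HU]] := @code_core n (#|K|.-1) P lam rho K Pu DS' lam0 sum1 (leqSpred _).
exists (#|K|.-1); split.
  move: hr; case: #|K| => [|k] hr /=; first by rewrite leq_maxr.
  by rewrite leq_max hr.
exists (#|K|.-1), n, (#|K|.-1.+1), U; split => //.
apply: le_trans HU _.
have hs : Num.sqrt eps <= 1 by rewrite -sqrtr1 ler_sqrt.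
have hs0 : 0 <= Num.sqrt eps by rewrite sqrtr_ge0.
have es : eps <= Num.sqrt eps.
  rewrite -{1}(sqr_sqrtr e0) expr2; nra.
rewrite -/del; lra.
Qed.

End Main.

Theorem theorem1 (R : realType) (dA : nat) (rho : 'M[R[i]]_dA) (eps : R) :
  is_state rho -> 0 <= eps <= 1 ->
  log2 dA%:R - Hmax_tilde rho eps <= purity rho (3 * Num.sqrt eps).
Proof.
case: dA rho => [|n] rho Hs He.
  by case: Hs => _ _; rewrite /mxtrace big_ord0 => /eqP; rewrite eq_sym oner_eq0.
have [c [hc ach]] := @code_exists R n rho eps Hs He.
apply: (@le_trans _ _ (log2 n.+1%:R - log2 c.+1%:R)).
  rewrite /Hmax_tilde lerB //.
  move: hc; set k := \rank _; case: k => [|k] hc.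
    have -> : c = 0%N by move: hc; case: (c).
    by rewrite /log2 ln1 mul0r log2_ge0.
  by apply: log2_le => //; move: hc; rewrite maxnE /=; rewrite addn0.
apply: sup_upper_bound => //; split; first by exists (log2 n.+1%:R - log2 c.+1%:R).
by exists (log2 n.+1%:R) => y; exact: (@achievable_bound R n rho).
Qed.
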